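(* Let $h$ be a Hessenberg function on $\{1,\dots,n\}$. For $x^\alpha\in\mathcal{B}_h$, let $\Psi_h(x^\alpha)$ be the Level $n$ word of the $h$-tableau-tree lying directly above the leaf labelled $x^\alpha$. Then $\Psi_h$ is a well-defined map from $\mathcal{B}_h$ to the set of $(h,(n))$-fillings, it sends monomials of degree $r$ to fillings with exactly $r$ dimension pairs, and $\Phi(\Psi_h(x^\alpha))=x^\alpha$ for all $x^\alpha\in\mathcal{B}_h$; more precisely, for every $k\in\{2,\dots,n\}$, $|D^{\Psi_h(x^\alpha)}_k|=\alpha_k$.
   Context: A Hessenberg function is $h:\{1,\dots,n\}\to\{1,\dots,n\}$, $h_i=h(i)$, with $i\le h_i$ and $h_i\le h_{i+1}$; degree tuple $\beta_i=i-\#\{k:h_k<i\}$; $\mathcal{B}_h=\{x_1^{\alpha_1}\cdots x_n^{\alpha_n}:0\le\alpha_i\le\beta_i-1\}$. A word $u_1\cdots u_m$ of distinct numbers is $h$-permissible if $u_t\le h(u_{t+1})$ for all $t$; an $(h,(n))$-filling is an $h$-permissible permutation $T=w_1\cdots w_n$ of $1,\dots,n$ in one row. Dimension pairs of such $T$: $(a,b)$ with $b>a$, $b$ appearing to the left of $a$, and, if $a$ is immediately followed by $c$, $b\le h(c)$. $D^T_k$ is the set of dimension pairs $(a,k)$ and $\Phi(T)=\prod_{k=2}^n x_k^{|D^T_k|}$. The $h$-tableau-tree: Level 1 is the word $1$; a vertex at Level $i-1$ is an $h$-permissible word on $\{1,\dots,i-1\}$ whose $\beta_i$ bullet positions are the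 gaps where inserting $i$ keeps it $h$-permissible; its child along edge $x_i^j$ ($0\le j\le\beta_i-1$) inserts $i$ at the $(j+1)$-th bullet from the right. Each Level $n$ word has one leaf child (edge label $1$) labelled by the product of edge labels on its root path. *)

(* Defs.v *)
From mathcomp Require Import all_boot.
Set Implicit Arguments. Unset Strict Implicit. Unset Printing Implicit Defensive.

(* h : {1..n} -> {1..n} is a Hessenberg function (values outside 1..n ignored). *)
Definition hessenberg (n : nat) (h : nat -> nat) : Prop :=
  (forall i, 1 <= i <= n -> i <= h i <= n) /\
  (forall i, 1 <= i < n -> h i <= h i.+1).

Definition beta (n : nat) (h : nat -> nat) (i : nat) : nat :=
  i - count (fun k => h k < i) (iota 1 n).

Definition in_Bh (n : nat) (h : nat -> nat) (alpha : nat -> nat) : Prop :=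
  forall i, 1 <= i <= n -> alpha i < beta n h i.

Definition permissible (h : nat -> nat) (w : seq nat) : bool :=
  uniq w && sorted (fun a b => a <= h b) w.

Definition filling (n : nat) (h : nat -> nat) (T : seq nat) : bool :=
  perm_eq T (iota 1 n) && permissible h T.

(* insert i in the gap at position p (0 = leftmost gap, size w = rightmost) *)
Definition insert_at (p i : nat) (w : seq nat) : seq nat :=
  take p w ++ i :: drop p w.

Definition bullets (h : nat -> nat) (i : nat) (w : seq nat) : seq nat :=
  [seq p <- iota 0 (size w).+1 | permissible h (insert_at p i w)].

(* child along edge x_i^j: insert i at the (j+1)-th bullet from the right *)
Definition child (h : nat -> nat) (i j : nat) (w : seq nat) : seq nat :=
  insert_at (nth 0 (rev (bullets h i w)) j) i w.

(* word at Level m on the root path with edge labels x_2^{alpha_2}, ..., x_m^{alpha_m} *)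
Fixpoint tree_word (h : nat -> nat) (alpha : nat -> nat) (m : nat) : seq nat :=
  match m with
  | 0 => [::]
  | m'.+1 => if m' is 0 then [:: 1] else child h m (alpha m) (tree_word h alpha m')
  end.

Definition Psi (n : nat) (h : nat -> nat) (alpha : nat -> nat) : seq nat :=
  tree_word h alpha n.

Definition dimpair (h : nat -> nat) (T : seq nat) (a b : nat) : bool :=
  [&& a \in T, b \in T, a < b, index b T < index a T &
      (((index a T).+1 < size T) ==> (b <= h (nth 0 T (index a T).+1)))].

Definition dim_pairs (h : nat -> nat) (T : seq nat) : seq (nat * nat) :=
  [seq p <- [seq (a, b) | a <- T, b <- T] | dimpair h T p.1 p.2].

Definition Dk (h : nat -> nat) (T : seq nat) (k : nat) : seq (nat * nat) :=
  [seq p <- dim_pairs h T | p.2 == k].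

(* exponent vector of Phi(T) = prod_{k=2}^n x_k^{|D^T_k|} *)
Definition Phi_exp (h : nat -> nat) (T : seq nat) (k : nat) : nat :=
  if 2 <= k then size (Dk h T k) else 0.

(* Main.v *)
Require Import Defs.
From mathcomp Require Import all_boot.
From Stdlib Require Import Lia.
Set Implicit Arguments. Unset Strict Implicit.

Ltac slia := repeat match goal with
  | H : is_true (~~ (_ <= _)) |- _ => rewrite -ltnNge in H
  | H : is_true (_ <= _) |- _ => move/leP: H => H
  | H : is_true (_ == _) |- _ => move/eqP: H => H
  | H : is_true (~~ (_ == _)) |- _ => move/eqP: H => H
  | |- is_true (~~ (_ <= _)) => rewrite -ltnNge
  | |- is_true (_ <= _) => apply/leP
  | |- is_true (_ == _) => apply/eqP
  | |- is_true (~~ (_ == _)) => apply/eqP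
  end; unfold addn, subn, addn_rec, subn_rec in *; cbv beta in *; try change (Equality.sort Datatypes_nat__canonical__eqtype_Equality) with nat in *; lia.

Lemma sorted_ins (r : rel nat) s1 s2 i : sorted r (s1 ++ s2) -> all (fun x => r x i) s1 ->
  sorted r (s1 ++ i :: s2) = (if s2 is c :: _ then r i c else true).
Proof.
case: s1 => [|a s1] /=.
- case: s2 => [|c s2] //= Hs _. by rewrite Hs andbT.
- rewrite !cat_path /= => /andP[Hp1 Hp2] /andP[Hai Hall].
  have Hl : r (last a s1) i.
  { have:= mem_last a s1; rewrite inE => /orP[/eqP->//|Hm]. exact: (allP Hall). }
  rewrite Hp1 Hl /=. case: s2 Hp2 => [|c s2] //= /andP[_ ->]. by rewrite andbT.
Qed.

Lemma perm_ins p i (w : seq nat) : perm_eq (insert_at p i w) (i :: w).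
Proof.
by rewrite /insert_at -[in X in perm_eq _ X](cat_take_drop p w) -(cat1s i (drop p w)) perm_catCA.
Qed.

Lemma bullet_char h i w p : permissible h w -> i \notin w ->
  (forall x, x \in w -> x <= h i) -> p <= size w ->
  permissible h (insert_at p i w) = (p == size w) || (i <= h (nth 0 w p)).
Proof.
move=> /andP[Hu Hs] Hi Hx Hp.
rewrite /permissible (perm_uniq (perm_ins p i w)) /= Hi Hu /= /insert_at.
rewrite sorted_ins; last first.
- apply/allP => x /mem_take; exact: Hx.
- by rewrite cat_take_drop.
case Hd: (drop p w) => [|c d].
- have: size (drop p w) = 0 by rewrite Hd.
  rewrite size_drop => Hs0. have ->: p == size w by slia. done.
- have Hlt: p < size w.
  { have: size (drop p w) > 0 by rewrite Hd. rewrite size_drop => H. slia. }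
  have ->: nth 0 w p = c by rewrite -[p]addn0 -nth_drop Hd.
  by rewrite (ltn_eqF Hlt).
Qed.

Lemma bullets_eq h i w : permissible h w -> i \notin w ->
  (forall x, x \in w -> x <= h i) ->
  bullets h i w = [seq p <- iota 0 (size w).+1 | (p == size w) || (i <= h (nth 0 w p))].
Proof.
move=> H1 H2 H3. apply: eq_in_filter => p; rewrite mem_iota => /andP[_ Hp].
by apply: bullet_char.
Qed.

Lemma size_bullets h i w : permissible h w -> i \notin w ->
  (forall x, x \in w -> x <= h i) ->
  size (bullets h i w) = (count (fun x => i <= h x) w).+1.
Proof.
move=> H1 H2 H3. rewrite bullets_eq // size_filter -addn1 iotaD count_cat /= add0n eqxx /=.
rewrite addn0 addn1; congr S.
rewrite -[in RHS](mkseq_nth 0 w) /mkseq count_map.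
apply: eq_in_count => q; rewrite mem_iota add0n => /andP[_ Hq].
by rewrite /= (ltn_eqF Hq).
Qed.

Lemma count_beta n h i w : hessenberg n h -> 1 <= i <= n -> perm_eq w (iota 1 i.-1) ->
  (count (fun x => i <= h x) w).+1 = beta n h i.
Proof.
move=> [Hh _] /andP[Hi1 Hin] Hp. rewrite (permP Hp) /beta.
case: i Hi1 Hin Hp => [|m] //= _ Hmn _.
have Hmn' : m <= n by slia.
rewrite -(subnKC Hmn') iotaD count_cat.
have ->: count (fun k => h k < m.+1) (iota (1 + m) (n - m)) = 0.
{ rewrite -[RHS](count_pred0 (iota (1 + m) (n - m))). apply: eq_in_count => k.
  rewrite mem_iota => /andP[H1 H2] /=. have /andP[H3 _] : k <= h k <= n.
  { apply: Hh. apply/andP; split; slia. }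
  apply/negbTE. slia. }
rewrite addn0.
have Hc := count_predC (fun k => h k < m.+1) (iota 1 m).
have ->: count (fun x => m < h x) (iota 1 m) = count (predC (fun k => h k < m.+1)) (iota 1 m).
{ apply: eq_count => x /=. by rewrite ltnNge. }
rewrite size_iota in Hc. slia.
Qed.

Fixpoint dc (h : nat -> nat) (k : nat) (s : seq nat) : nat :=
  match s with
  | [::] => 0
  | a :: s' => ((a < k) && (if s' is c :: _ then k <= h c else true)) + dc h k s'
  end.

Definition F (h : nat -> nat) (T : seq nat) (k : nat) : nat :=
  count (fun a => dimpair h T a k) T.

Lemma dimpair_suffix h k P s : uniq (P ++ s) -> k \in P ->
  count (fun a => dimpair h (P ++ s) a k) s = dc h k s.
Proof.
elim: s P => [|a s IH] P Hu Hk //=.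
congr addn; last first.
{ rewrite -cat_rcons. apply: IH; first by rewrite cat_rcons.
  by rewrite mem_rcons inE Hk orbT. }
have HaP : a \notin P.
{ move: Hu; rewrite cat_uniq => /and3P[_ Hh _]. apply/negP => Ha.
  move/negP: Hh; apply; by rewrite /= Ha. }
rewrite /dimpair !mem_cat Hk inE eqxx orbT /= !index_cat Hk (negbTE HaP) /= eqxx addn0.
have E1 : ((size P).+1 < size P) = false by apply/negbTE; slia.
rewrite (index_mem k P) Hk /= size_cat /= nth_cat E1 subSnn.
case: s {IH Hu} => [|c s] /=.
- by rewrite addn1 ltnn /= andbT.
- have -> : (size P).+1 < size P + (size s).+2 by slia. done.
Qed.

Lemma count_dim_split h k s1 s2 : uniq (s1 ++ k :: s2) ->
  F h (s1 ++ k :: s2) k = dc h k s2.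
Proof.
move=> Hu. rewrite /F count_cat.
have HkP : k \notin s1.
{ move: Hu; rewrite cat_uniq => /and3P[_ Hh _]. apply/negP => Ha.
  move/negP: Hh; apply; by rewrite /= Ha. }
have ->: count (fun a => dimpair h (s1 ++ k :: s2) a k) s1 = 0.
{ rewrite -[RHS](count_pred0 s1). apply: eq_in_count => a Ha /=.
  rewrite /dimpair !index_cat Ha (negbTE HkP) /= eqxx addn0.
  have: index a s1 < size s1 by rewrite index_mem.
  move=> H. apply/negbTE. apply/negP => /and5P[_ _ _ H2 _]. slia. }
rewrite add0n /= {1}/dimpair ltnn !andbF add0n -cat_rcons.
apply: dimpair_suffix; first by rewrite cat_rcons.
by rewrite mem_rcons inE eqxx.
Qed.

Lemma dc_ins h k m q s : k < m -> k <= h m ->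
  (size s <= q) || (m <= h (nth 0 s q)) -> dc h k (insert_at q m s) = dc h k s.
Proof.
move=> Hkm Hkh.
have Hmk : (m < k) = false by apply/negbTE; slia.
elim: s q => [|a s IH] [|q] /= Hb.
- by rewrite /insert_at /= Hmk.
- by rewrite /insert_at /= Hmk.
- by rewrite /insert_at /= Hmk.
- rewrite -/(insert_at q m s) IH; last by rewrite ltnS in Hb.
  congr addn. congr andb.
  case: q Hb => [|q] Hb.
  + rewrite /insert_at take0 drop0 /= Hkh. case: s Hb {IH} => [|c s] //= Hb.
    by rewrite (leq_trans (ltnW Hkm) Hb).
  + case: s Hb {IH} => [|c s] Hb.
    * have -> : insert_at q.+1 m [::] = [:: m] by [].
      by rewrite /= Hkh.
    * by have -> : insert_at q.+1 m (c :: s) = c :: insert_at q m s by [].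
Qed.

Lemma insert_cat_l p m (s1 s2 : seq nat) : p <= size s1 ->
  insert_at p m (s1 ++ s2) = insert_at p m s1 ++ s2.
Proof.
move=> Hp. rewrite /insert_at take_cat drop_cat. case: ltnP => H.
- by rewrite -catA.
- have Ep: p = size s1 by apply/eqP; rewrite eqn_leq Hp H.
  by rewrite Ep subnn take0 drop0 take_size drop_size cats0 -catA.
Qed.

Lemma insert_cat_r p m (s1 s2 : seq nat) : size s1 <= p ->
  insert_at p m (s1 ++ s2) = s1 ++ insert_at (p - size s1) m s2.
Proof.
move=> Hp. by rewrite /insert_at take_cat drop_cat ltnNge Hp /= -catA.
Qed.

Lemma F_ins_large h k m p w : uniq (insert_at p m w) -> k \in w -> k < m -> k <= h m ->
  (size w <= p) || (m <= h (nth 0 w p)) -> F h (insert_at p m w) k = F h w k.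
Proof.
move=> Hu Hk Hkm Hkh Hb.
have Hw : uniq w by move: Hu; rewrite (perm_uniq (perm_ins p m w)) => /andP[].
case/splitPr: Hk Hu Hb Hw => s1 s2 Hu Hb Hw.
case: (leqP p (size s1)) => Hp.
- rewrite insert_cat_l // in Hu *.
  by rewrite !count_dim_split.
- have Ep : p = size s1 + (p - size s1 - 1).+1 by slia.
  move: Hu Hb. set q := p - size s1 - 1. rewrite Ep insert_cat_r ?leq_addr // addKn => Hu Hb.
  have E2 : insert_at q.+1 m (k :: s2) = k :: insert_at q m s2 by [].
  rewrite E2 in Hu *.
  rewrite !count_dim_split //. apply: dc_ins => //.
  move: Hb. rewrite size_cat /= nth_cat ltnNge leq_addr /= addKn /=.
  by rewrite -/q leq_add2l ltnS.
Qed.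

Lemma dc_all_small h k s : all (fun x => x < k) s ->
  dc h k s = count (fun q => (q == size s) || (k <= h (nth 0 s q))) (iota 1 (size s)).
Proof.
elim: s => [|a s IH] //= /andP[Ha Hs].
rewrite IH // Ha /=.
rewrite (_ : iota 2 (size s) = map (addn 1) (iota 1 (size s))); last by rewrite -iotaDl.
rewrite count_map. congr addn.
by case: s {IH Hs} => [|c s].
Qed.

Lemma count_gt_nth (s : seq nat) i : sorted ltn s -> i < size s ->
  count (fun x => nth 0 s i < x) s = size s - i.+1.
Proof.
elim: s i => [|a s IH] [|i] //= Hs Hi.
- rewrite ltnn add0n subn1 /=. apply/eqP. rewrite -all_count.
  exact: (order_path_min ltn_trans Hs).
- have Hall := order_path_min ltn_trans Hs.
  have Hy : a < nth 0 s i by apply: (allP Hall); apply: mem_nth.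
  have -> : (nth 0 s i < a) = false by apply/negbTE; slia.
  rewrite add0n IH //; last exact: path_sorted Hs.
Qed.

Lemma F_new h i w j : permissible h w -> i \notin w -> (forall x, x \in w -> x < i) ->
  (forall x, x \in w -> x <= h i) -> j < size (bullets h i w) ->
  F h (child h i j w) i = j.
Proof.
move=> Hperm Hi Hsm Hhi Hj.
have Hsorted : sorted ltn (bullets h i w).
{ rewrite /bullets. apply: sorted_filter; [exact: ltn_trans | exact: iota_ltn_sorted]. }
set bl := bullets h i w in Hj Hsorted *.
set p := nth 0 (rev bl) j.
have Hpbl : p \in bl by rewrite /p -mem_rev; apply: mem_nth; rewrite size_rev.
have Hpw : p <= size w.
{ move: Hpbl; rewrite /bl /bullets mem_filter mem_iota => /andP[_ /andP[_ H]]. slia. }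
have Hcnt : count (fun x => p < x) bl = j.
{ rewrite /p (nth_rev _ Hj) count_gt_nth //; last by slia. slia. }
have Hu : uniq (insert_at p i w).
{ rewrite (perm_uniq (perm_ins p i w)) /= Hi. by case/andP: Hperm. }
rewrite /child -/bl -/p. move: Hu. rewrite /insert_at => Hu.
rewrite count_dim_split // dc_all_small; last first.
{ apply/allP => x /mem_drop. exact: Hsm. }
rewrite size_drop -Hcnt.
transitivity (count (fun x => (x == size w) || (i <= h (nth 0 w x))) (iota p.+1 (size w - p))).
{ rewrite -(addn1 p) iotaDl count_map. apply: eq_count => q /=.
  rewrite nth_drop. congr orb. by rewrite -{2}(subnKC Hpw) eqn_add2l. }
rewrite /bl bullets_eq // count_filter.
rewrite (_ : (size w).+1 = p.+1 + (size w - p)); last by slia.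
rewrite iotaD count_cat add0n.
rewrite (_ : count _ (iota 0 p.+1) = 0); last first.
{ rewrite -[RHS](count_pred0 (iota 0 p.+1)). apply: eq_in_count => x.
  rewrite mem_iota add0n => /andP[_ H] /=. apply/negbTE. rewrite negb_and. apply/orP; left. slia. }
rewrite add0n. apply: eq_in_count => x. rewrite mem_iota => /andP[H _] /=.
by rewrite H.
Qed.

Definition Inv h alpha m := [/\ perm_eq (tree_word h alpha m) (iota 1 m),
  permissible h (tree_word h alpha m) &
  forall k, 2 <= k <= m -> F h (tree_word h alpha m) k = alpha k].

Lemma inv_all n h alpha : hessenberg n h -> in_Bh n h alpha ->
  forall m, 1 <= m <= n -> Inv h alpha m.
Proof.
move=> Hh HB. elim=> [|m IH] //. move=> /andP[_ Hmn].
case: m IH Hmn => [|m] IH Hmn.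
- split => //. move=> k /andP[H1 H2]. by case: k H1 H2 => [|[|k]].
- have [Hp Hperm HF] : Inv h alpha m.+1 by apply: IH; apply/andP; split; slia.
  set W := tree_word h alpha m.+1 in Hp Hperm HF.
  have Ew : tree_word h alpha m.+2 = child h m.+2 (alpha m.+2) W by [].
  rewrite /Inv Ew.
  have Hii : m.+2 <= h m.+2.
  { have /andP[] := (proj1 Hh) m.+2 (ltac:(apply/andP; split; slia)). done. }
  have Hi : m.+2 \notin W.
  { apply/negP; rewrite (perm_mem Hp) mem_iota => /andP[_ H]. slia. }
  have Hsm : forall x, x \in W -> x < m.+2.
  { move=> x; rewrite (perm_mem Hp) mem_iota => /andP[_ H]. slia. }
  have Hhi : forall x, x \in W -> x <= h m.+2.
  { move=> x Hx. exact: leq_trans (ltnW (Hsm x Hx)) Hii. }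
  have HuW : uniq W by rewrite (perm_uniq Hp) iota_uniq.
  have Hsz : size (bullets h m.+2 W) = beta n h m.+2.
  { rewrite size_bullets //. apply: (count_beta Hh) => //. }
  have Hj : alpha m.+2 < size (bullets h m.+2 W).
  { rewrite Hsz. apply: HB. apply/andP; split; slia. }
  set p := nth 0 (rev (bullets h m.+2 W)) (alpha m.+2).
  have Hpbl : p \in bullets h m.+2 W by rewrite /p -mem_rev; apply: mem_nth; rewrite size_rev.
  have Ec : child h m.+2 (alpha m.+2) W = insert_at p m.+2 W by [].
  have Hu : uniq (insert_at p m.+2 W).
  { by rewrite (perm_uniq (perm_ins p m.+2 W)) /= Hi. }
  split.
  + rewrite Ec. apply: perm_trans (perm_ins _ _ _) _.
    have -> : iota 1 m.+2 = iota 1 m.+1 ++ [:: m.+2] by rewrite -[in LHS](addn1 m.+1) iotaD add1n.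
    rewrite perm_sym perm_catC /= perm_cons perm_sym. exact: Hp.
  + rewrite Ec. move: Hpbl; rewrite /bullets mem_filter => /andP[H _]; exact H.
  + move=> k /andP[Hk1 Hk2]. case: (ltngtP k m.+2) => Hkm.
    * rewrite Ec F_ins_large //.
      - apply: HF. apply/andP; split; slia.
      - rewrite (perm_mem Hp) mem_iota. apply/andP; split; slia.
      - exact: leq_trans (ltnW Hkm) Hii.
      - have Hw : permissible h W := Hperm.
        move: Hpbl. rewrite bullets_eq // mem_filter => /andP[/orP[/eqP->|->] _].
        + by rewrite leqnn.
        + by rewrite orbT.
    * exfalso. slia.
    * rewrite Hkm. exact: F_new.
Qed.

Lemma count_allpairs (a : pred (nat * nat)) (s t : seq nat) :
  count a [seq (x, y) | x <- s, y <- t] = \sum_(x <- s) count (fun y => a (x, y)) t.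
Proof.
elim: s => [|x s IH]; first by rewrite big_nil.
by rewrite allpairs_cons count_cat IH big_cons count_map.
Qed.

Lemma count_sum (P : pred nat) (s : seq nat) : count P s = \sum_(x <- s) (P x : nat).
Proof. elim: s => [|x s IH]; first by rewrite big_nil. by rewrite big_cons /= IH. Qed.

Lemma pick_k h T x k : uniq T ->
  count (fun y => (y == k) && dimpair h T x y) T = dimpair h T x k.
Proof.
move=> Hu. case D: (dimpair h T x k).
- have kT : k \in T by move: D; rewrite /dimpair => /and5P[_ -> _ _ _].
  transitivity (count_mem k T); last by rewrite count_uniq_mem // kT.
  apply: eq_count => y /=.
  case: (eqVneq y k) => [->|Hne] /=; first by rewrite D. by [].
- transitivity (count pred0 T); last by rewrite count_pred0.
  apply: eq_count => y /=.
  case: (eqVneq y k) => [->|Hne] /=; first by rewrite D. by [].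
Qed.

Lemma sizeDk h T k : uniq T -> size (Dk h T k) = F h T k.
Proof.
move=> Hu. rewrite /Dk /dim_pairs size_filter count_filter count_allpairs /F count_sum.
apply: eq_bigr => x _. rewrite -(@pick_k h T x k Hu). by apply: eq_count => y.
Qed.

Lemma size_dim h T : size (dim_pairs h T) = \sum_(x <- T) \sum_(y <- T) (dimpair h T x y : nat).
Proof.
rewrite /dim_pairs size_filter count_allpairs. apply: eq_bigr => x _. by rewrite count_sum.
Qed.

Unset Implicit Arguments.

Theorem mainTheorem17 (n : nat) (h : nat -> nat) (alpha : nat -> nat) :
  hessenberg n h -> in_Bh n h alpha ->
  [/\ (forall i, 2 <= i <= n ->
         size (bullets h i (tree_word h alpha i.-1)) = beta n h i),
      filling n h (Psi n h alpha),
      size (dim_pairs h (Psi n h alpha)) = \sum_(1 <= i < n.+1) alpha i,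
      (forall k, 1 <= k <= n -> Phi_exp h (Psi n h alpha) k = alpha k) &
      (forall k, 2 <= k <= n -> size (Dk h (Psi n h alpha) k) = alpha k)].
Proof.
move=> Hh HB.
have Ha1 : 1 <= n -> alpha 1 = 0.
{ move=> Hn. have := HB 1 (ltac:(apply/andP; split; slia)). rewrite /beta => H. slia. }
have P1 : forall i, 2 <= i <= n ->
         size (bullets h i (tree_word h alpha i.-1)) = beta n h i.
{ move=> i /andP[Hi1 Hin].
  have [Hp Hperm _] : Inv h alpha i.-1 by apply: (inv_all Hh HB); apply/andP; split; slia.
  have Hii : i <= h i.
  { have /andP[] := (proj1 Hh) i (ltac:(apply/andP; split; slia)). done. }
  have Hi : i \notin tree_word h alpha i.-1.
  { apply/negP; rewrite (perm_mem Hp) mem_iota => /andP[_ H]. slia. }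
  rewrite size_bullets //.
  - apply: (count_beta Hh) => //. apply/andP; split; slia.
  - move=> x; rewrite (perm_mem Hp) mem_iota => /andP[_ H]. slia. }
case: n Hh HB Ha1 P1 => [|n] Hh HB Ha1 P1.
{ split => //; try (move=> k /andP[H1 H2]; exfalso; slia).
  by rewrite big_geq. }
have [Hp Hperm HF] : Inv h alpha n.+1 by apply: (inv_all Hh HB); apply/andP; split; slia.
rewrite /Psi.
set T := tree_word h alpha n.+1 in Hp Hperm HF *.
have Hu : uniq T by rewrite (perm_uniq Hp) iota_uniq.
have HFall : forall k, 1 <= k <= n.+1 -> F h T k = alpha k.
{ move=> k /andP[Hk1 Hk2]. case: k Hk1 Hk2 => [|[|k]] Hk1 Hk2 //.
  - rewrite Ha1 //. transitivity (count pred0 T); last by rewrite count_pred0.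
    apply: eq_in_count => a Ha /=.
    rewrite /dimpair. apply/negbTE. rewrite negb_and. apply/orP; right.
    rewrite negb_and. apply/orP; right. rewrite negb_and. apply/orP; left.
    move: Ha. rewrite (perm_mem Hp) mem_iota => /andP[H _]. slia.
  - apply: HF. apply/andP; split; slia. }
split => //.
- by rewrite /filling Hp Hperm.
- rewrite size_dim.
  have -> : \sum_(1 <= i < n.+2) alpha i = \sum_(1 <= i < n.+2) \sum_(x <- T) (dimpair h T x i : nat).
  { apply: eq_big_nat => k Hk. by rewrite -count_sum -/(F h T k) HFall. }
  rewrite [RHS]exchange_big /=. apply: eq_bigr => x _. apply: perm_big.
  rewrite /index_iota subSS subn0 perm_sym. by rewrite perm_sym.
- move=> k Hk. rewrite /Phi_exp. case: ifP => H2.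
  + rewrite sizeDk // HFall //.
  + have Ek : k = 1 by move/negbT: H2 => H2; move: Hk => /andP[H1 _]; slia.
    by rewrite Ek Ha1.
- move=> k /andP[Hk1 Hk2]. rewrite sizeDk // HFall //. apply/andP; split; slia.
Qed.
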